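(* Let $E\subseteq\mathcal F(\mathbb Z^s,\bar K)$ be a translation-invariant subspace of finite dimension. Then $E$ is a characteristic subspace (i.e., spanned by finitely many characters $\theta\in\mathrm{Char}(\mathbb Z^s,\bar K^\times)$) if and only if its period lattice $\Lambda(E)$ is a characteristic sublattice, i.e. has finite index in $\mathbb Z^s$ coprime to $p$.
   Context: $K=\mathrm{GF}(p^r)$, $\bar K$ an algebraic closure; $\mathcal F(\mathbb Z^s,\bar K)$ is the space of all functions $\mathbb Z^s\to\bar K$; translation-invariant means stable under all $\tau_v:f\mapsto f(\cdot+v)$. $\mathrm{Char}(\mathbb Z^s,\bar K^\times)$ is the set of homomorphisms $\mathbb Z^s\to\bar K^\times$. The period lattice of $E$ is $\Lambda(E)=\{v\in\mathbb Z^s:\tau_v f=f\ \forall f\in E\}$ (it has finite index since $E$ is finite dimensional). A sublattice is characteristic if it equals $\bigcap_{i=1}^m\ker(\theta_i)$ for some characters $\theta_1,\ldots,\theta_m$; a finite-index sublattice is characteristic iff its index is coprime to $p$. *)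

(* Defs.v *)
From HB Require Import structures.
From mathcomp Require Import all_boot all_order all_algebra.
Set Implicit Arguments. Unset Strict Implicit. Unset Printing Implicit Defensive.
Import Order.TTheory GRing.Theory Num.Theory.
Local Open Scope ring_scope.

(* Z^s is modelled as the row vectors 'rV[int]_s; functions Z^s -> F are
   plain Coq functions.  F plays the role of \bar K. *)

(* F is algebraic over its prime field F_p (char p): every element lies in
   a finite subfield, i.e. x ^+ (p ^ n) = x for some n >= 1. *)
Definition algebraic_over_Fp (F : fieldType) (p : nat) : Prop :=
  forall x : F, exists2 n : nat, (0 < n)%N & x ^+ (p ^ n) = x.

Definition transl (s : nat) (F : Type) (v : 'rV[int]_s) (f : 'rV[int]_s -> F)
  : 'rV[int]_s -> F := fun x => f (x + v).

Definition span (s : nat) (F : fieldType) (n : nat) (fs : 'I_n -> 'rV[int]_s -> F)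
  (g : 'rV[int]_s -> F) : Prop :=
  exists c : 'I_n -> F, forall x, g x = \sum_(i < n) c i * fs i x.

Definition fin_dim_subspace (s : nat) (F : fieldType) (E : ('rV[int]_s -> F) -> Prop) : Prop :=
  exists n (fs : 'I_n -> 'rV[int]_s -> F), forall g, E g <-> span fs g.

Definition transl_invariant (s : nat) (F : Type) (E : ('rV[int]_s -> F) -> Prop) : Prop :=
  forall v f, E f -> E (transl v f).

Definition is_character (s : nat) (F : fieldType) (th : 'rV[int]_s -> F) : Prop :=
  th 0 = 1 /\ forall u v, th (u + v) = th u * th v.

Definition characteristic_subspace (s : nat) (F : fieldType) (E : ('rV[int]_s -> F) -> Prop) : Prop :=
  exists m (th : 'I_m -> 'rV[int]_s -> F),
    (forall j, is_character (th j)) /\ (forall g, E g <-> span th g).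

Definition period_lattice (s : nat) (F : Type) (E : ('rV[int]_s -> F) -> Prop)
  (v : 'rV[int]_s) : Prop :=
  forall f, E f -> transl v f = f.

Definition characteristic_sublattice (s : nat) (F : fieldType) (L : 'rV[int]_s -> Prop) : Prop :=
  exists m (th : 'I_m -> 'rV[int]_s -> F),
    (forall j, is_character (th j)) /\ (forall v, L v <-> forall j, th j v = 1).

(* L has index n in Z^s: 'I_n indexes a complete irredundant system of coset
   representatives *)
Definition has_index (s : nat) (L : 'rV[int]_s -> Prop) (n : nat) : Prop :=
  exists reps : 'I_n -> 'rV[int]_s, forall v, exists! i, L (v - reps i).

(* Main.v *)
Require Import Defs.
From HB Require Import structures.
From mathcomp Require Import all_boot all_order all_algebra.
From mathcomp Require Import all_fingroup all_solvable all_field.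
From mathcomp Require Import zify ring.
From Stdlib Require Import ClassicalEpsilon IndefiniteDescription FunctionalExtensionality.
Set Implicit Arguments. Unset Strict Implicit. Unset Printing Implicit Defensive.
Import Order.TTheory GRing.Theory Num.Theory.
Local Open Scope ring_scope.


Lemma prim_root_exists_closed (F : closedFieldType) (n : nat) :
  (n > 0)%N -> n%:R != 0 :> F -> exists z : F, n.-primitive_root z.
Proof.
move=> n_gt0 nz.
pose p : {poly F} := 'X^n - 1; have [r Dp] := closed_field_poly_normal p.
rewrite (monicP _) ?monicXnsubC // scale1r in Dp.
have rn1: all n.-unity_root r by apply/allP=> z; rewrite -root_prod_XsubC -Dp.
have sz_r: (n < (size r).+1)%N.
  by rewrite -(size_prod_XsubC r id) -Dp size_XnsubC.
have [|z] := hasP (has_prim_root n_gt0 rn1 _ sz_r); last by exists z.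
by rewrite -separable_prod_XsubC -Dp separable_Xn_sub_1.
Qed.


Lemma prim_exprz1 (F : fieldType) (N : nat) (z : F) (y : int) :
  N.-primitive_root z -> (z ^ y == 1) = (N%:Z %| y)%Z.
Proof.
move=> hz; rewrite dvdzE /=; case: y => m.
  by rewrite /= -(prim_order_dvd hz).
rewrite NegzE -invr_expz invr_eq1 -(prim_order_dvd hz).
by rewrite abszN.
Qed.

Lemma geom_sum (F : fieldType) (N : nat) (z : F) (y : int) :
  N.-primitive_root z ->
  \sum_(k < N) z ^ ((k : nat)%:Z * y) = if (N%:Z %| y)%Z then N%:R else 0.
Proof.
move=> hz.
rewrite (eq_bigr (fun k : 'I_N => (z ^ y) ^+ k)); last first.
  by move=> k _; rewrite mulrC -exprz_exp.
have wN : (z ^ y) ^+ N = 1.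
  rewrite -[_ ^+ N]/((z ^ y) ^ (N%:Z)) exprzAC.
  by rewrite -[z ^ (N%:Z)]/(z ^+ N) prim_expr_order // exp1rz.
case: ifP => hd.
  have /eqP -> : z ^ y == 1 by rewrite (prim_exprz1 _ hz).
  by rewrite (eq_bigr (fun _ => 1)) => [|k _]; rewrite ?expr1n // sumr_const card_ord.
have hw : z ^ y - 1 != 0 by rewrite subr_eq0 (prim_exprz1 _ hz) hd.
have := subrX1 (z ^ y) N; rewrite wN subrr => /esym /eqP.
by rewrite mulf_eq0 (negPf hw) /= => /eqP.
Qed.


Definition vecb (s N : nat) (b : {ffun 'I_s -> 'I_N}) : 'rV[int]_s :=
  \row_i ((b i : nat)%:Z).

Definition chi (F : fieldType) (s N : nat) (z : F) (a : {ffun 'I_s -> 'I_N})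
  (x : 'rV[int]_s) : F := \prod_(i < s) z ^ ((a i : nat)%:Z * x 0 i).

Lemma chi0 (F : fieldType) (s N : nat) (z : F) (a : {ffun 'I_s -> 'I_N}) : chi z a (0 : 'rV[int]_s) = 1.
Proof. by rewrite /chi big1 // => i _; rewrite mxE mulr0 expr0z. Qed.

Lemma chiD (F : fieldType) (s N : nat) (z : F) (a : {ffun 'I_s -> 'I_N}) (u v : 'rV[int]_s) :
  z != 0 -> chi z a (u + v) = chi z a u * chi z a v.
Proof.
move=> nz; rewrite /chi -big_split /=; apply: eq_bigr => i _.
by rewrite mxE mulrDr expfzDr.
Qed.

Lemma chi_char (F : fieldType) (s N : nat) (z : F) (a : {ffun 'I_s -> 'I_N}) :
  z != 0 -> is_character (chi z a : 'rV[int]_s -> F).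
Proof. by move=> nz; split; [apply: chi0 | move=> u v; apply: chiD]. Qed.

Lemma sum_chi (F : fieldType) (s N : nat) (z : F) (y : 'rV[int]_s) :
  N.-primitive_root z ->
  \sum_(a : {ffun 'I_s -> 'I_N}) chi z a y =
    if [forall i : 'I_s, (N%:Z %| y 0%R i)%Z] then N%:R ^+ s else 0.
Proof.
move=> hz; rewrite /chi.
rewrite -(bigA_distr_bigA (fun i (k : 'I_N) => z ^ ((k : nat)%:Z * y 0 i))) /=.
under eq_bigr do rewrite geom_sum //.
case: ifP => [/forallP hall | /negbT].
  by rewrite (eq_bigr (fun _ => N%:R)) ?prodr_const ?card_ord // => i _; rewrite hall.
rewrite negb_forall => /existsP [i hi].
by rewrite (bigD1 i) //= (negPf hi) mul0r.
Qed.

Lemma dvd_ord_diff (N : nat) (m n : 'I_N) :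
  (N%:Z %| ((m : nat)%:Z - (n : nat)%:Z))%Z = (m == n).
Proof.
by rewrite -eqz_mod_dvd !modz_small ?ltz_nat ?ltn_ord //.
Qed.

Lemma orth_chi (F : fieldType) (s N : nat) (z : F) (a a' : {ffun 'I_s -> 'I_N}) :
  N.-primitive_root z -> z != 0 ->
  \sum_(b : {ffun 'I_s -> 'I_N}) chi z a (- vecb b) * chi z a' (vecb b) =
    if a' == a then N%:R ^+ s else 0.
Proof.
move=> hz nz; rewrite /chi.
under eq_bigr => b _.
  rewrite -big_split /=.
  under eq_bigr => i _.
    rewrite !mxE -expfzDr // mulrN -mulNr -mulrDl addrC mulrC.
  over.
over.
rewrite -(bigA_distr_bigA (fun i (k : 'I_N) =>
   z ^ ((k : nat)%:Z * ((a' i : nat)%:Z - (a i : nat)%:Z)))) /=.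
under eq_bigr do rewrite geom_sum // dvd_ord_diff.
case: eqP => [-> | hne].
  by rewrite (eq_bigr (fun _ => N%:R)) ?prodr_const ?card_ord // => i _; rewrite eqxx.
have [i hi] : exists i, a' i != a i.
  apply/existsP; rewrite -negb_forall; apply/negP => /forallP h.
  by apply: hne; apply/ffunP => i; apply/eqP.
by rewrite (bigD1 i) //= (negPf hi) mul0r.
Qed.


Lemma absz_modz_lt (N : nat) (y : int) : (0 < N)%N -> (`|(y %% N%:Z)%Z| < N)%N.
Proof.
move=> hN; rewrite -ltz_nat abszE ger0_norm ?modz_ge0 ?ltz_pmod //.
by rewrite eqz_nat -lt0n.
Qed.

Definition modbox (s N : nat) (hN : (0 < N)%N) (x : 'rV[int]_s) : {ffun 'I_s -> 'I_N} :=
  [ffun i => Ordinal (absz_modz_lt (x 0 i) hN)].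

Lemma modbox_val (s N : nat) (hN : (0 < N)%N) (x : 'rV[int]_s) i :
  ((modbox hN x i : nat)%:Z = (x 0%R i %% N%:Z)%Z).
Proof.
rewrite ffunE /= abszE ger0_norm ?modz_ge0 //.
by rewrite eqz_nat -lt0n.
Qed.

Lemma modbox_per (s N : nat) (hN : (0 < N)%N) (x : 'rV[int]_s) :
  x = vecb (modbox hN x) + (\row_i (x 0%R i %/ N%:Z)%Z) *+ N.
Proof.
apply/matrixP => i j; rewrite !mxE mulmxnE !mxE modbox_val.
rewrite (ord1 i) {1}(divz_eq (x 0 j) N%:Z) addrC.
by rewrite -[in RHS]mulr_natr natz.
Qed.

Lemma modbox_eq (s N : nat) (hN : (0 < N)%N) (x : 'rV[int]_s) (b : {ffun 'I_s -> 'I_N}) :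
  [forall i : 'I_s, (N%:Z %| (- vecb b + x) 0%R i)%Z] = (b == modbox hN x).
Proof.
apply/forallP/eqP => [h | ->] .
  apply/ffunP => i; apply/val_inj/eqP; rewrite -eqz_nat modbox_val.
  have := h i; rewrite !mxE addrC -eqz_mod_dvd => /eqP ->.
  by rewrite modz_small // lez_nat ltz_nat ltn_ord.
move=> i; rewrite !mxE addrC -eqz_mod_dvd modbox_val.
by rewrite modz_mod.
Qed.

Definition coef (F : fieldType) (s N : nat) (z : F) (f : 'rV[int]_s -> F)
  (a : {ffun 'I_s -> 'I_N}) : F :=
  (N%:R ^+ s)^-1 * \sum_(b : {ffun 'I_s -> 'I_N}) chi z a (- vecb b) * f (vecb b).

Lemma fourier (F : fieldType) (s N : nat) (z : F) (f : 'rV[int]_s -> F) (x : 'rV[int]_s) :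
  N.-primitive_root z -> (0 < N)%N -> N%:R != 0 :> F ->
  (forall x w, f (x + w *+ N) = f x) ->
  f x = \sum_(a : {ffun 'I_s -> 'I_N}) coef z f a * chi z a x.
Proof.
move=> hz hN hNF hper.
have nz : z != 0 by rewrite (prim_root_eq0 hz) -lt0n.
rewrite /coef.
under eq_bigr => a _ do rewrite -mulrA mulr_suml.
rewrite -mulr_sumr exchange_big /=.
under eq_bigr => b _.
  under eq_bigr => a _ do rewrite mulrAC -chiD //.
  rewrite -mulr_suml sum_chi // modbox_eq.
  over.
rewrite (bigD1 (modbox hN x)) //= eqxx big1 => [|b /negPf -> ]; last by rewrite mul0r.
rewrite addr0 mulrA mulVf ?expf_neq0 // mul1r.
by rewrite {1}(modbox_per hN x) hper.
Qed.


Lemma proj_eq (F : fieldType) (s N : nat) (z : F) (f : 'rV[int]_s -> F)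
   (a : {ffun 'I_s -> 'I_N}) (x : 'rV[int]_s) :
  N.-primitive_root z -> (0 < N)%N -> N%:R != 0 :> F ->
  (forall x w, f (x + w *+ N) = f x) ->
  \sum_(b : {ffun 'I_s -> 'I_N}) ((N%:R ^+ s)^-1 * chi z a (- vecb b)) * f (x + vecb b)
  = coef z f a * chi z a x.
Proof.
move=> hz hN hNF hper.
have nz : z != 0 by rewrite (prim_root_eq0 hz) -lt0n.
have e : forall (A B C D E : F), A * B * (C * (D * E)) = C * D * (A * (B * E)).
  by move=> A B C D E; ring.
under eq_bigr => b _.
  rewrite (@fourier _ _ _ z f (x + vecb b) hz hN hNF hper) mulr_sumr.
  under eq_bigr => a' _ do rewrite chiD // e.
  over.
rewrite exchange_big /=.
under eq_bigr => a' _ do rewrite -mulr_sumr -mulr_sumr orth_chi //.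
rewrite (bigD1 a) //= eqxx big1 => [|a' /negPf ->]; last by rewrite !mulr0.
by rewrite addr0 mulVf ?expf_neq0 // mulr1.
Qed.


Definition decb (P : Prop) : bool := if excluded_middle_informative P then true else false.
Lemma decbP (P : Prop) : reflect P (decb P).
Proof. by rewrite /decb; case: excluded_middle_informative => h; constructor. Qed.

Lemma E_ext (s : nat) (F : Type) (E : ('rV[int]_s -> F) -> Prop) f g :
  E f -> (forall x, f x = g x) -> E g.
Proof. by move=> hf h; have <- : f = g by apply: functional_extensionality. Qed.

Lemma E_lin (F : fieldType) (s : nat) (E : ('rV[int]_s -> F) -> Prop)
  (hE : fin_dim_subspace E) (I : finType) (c : I -> F) (h : I -> 'rV[int]_s -> F) :
  (forall i, E (h i)) -> E (fun x => \sum_i c i * h i x).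
Proof.
case: hE => n [fs hfs] hh.
have [D hD] : exists D : I -> 'I_n -> F, forall i x, h i x = \sum_(k < n) D i k * fs k x.
  apply: (functional_choice (fun i d => forall x, h i x = \sum_(k < n) d k * fs k x)).
  by move=> i; apply/hfs/hh.
apply/hfs; exists (fun k => \sum_i c i * D i k) => x.
under eq_bigr => i _ do rewrite hD mulr_sumr.
rewrite exchange_big /=; apply: eq_bigr => k _.
by rewrite mulr_suml; apply: eq_bigr => i _; rewrite mulrA.
Qed.

Lemma charsub_of_periodic (F : fieldType) (s N : nat) (z : F)
  (E : ('rV[int]_s -> F) -> Prop) :
  N.-primitive_root z -> (0 < N)%N -> N%:R != 0 :> F ->
  fin_dim_subspace E -> transl_invariant E ->
  (forall f, E f -> forall x w, f (x + w *+ N) = f x) ->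
  characteristic_subspace E.
Proof.
move=> hz hN hNF hE hinv hper.
have nz : z != 0 by rewrite (prim_root_eq0 hz) -lt0n.
pose S := [set a : {ffun 'I_s -> 'I_N} | decb (E (chi z a))].
have key : forall (g : 'rV[int]_s -> F) (a : {ffun 'I_s -> 'I_N}), E g -> coef z g a != 0 -> E (chi z a).
  move=> g a Eg hc.
  have E1 := E_lin hE (fun b : {ffun 'I_s -> 'I_N} => (N%:R ^+ s)^-1 * chi z a (- vecb b))
     (h := fun b => transl (vecb b) g) (fun b => hinv (vecb b) g Eg).
  have E2 : E (fun x => coef z g a * chi z a x).
    refine (E_ext E1 _) => x; rewrite /transl.
    exact: (@proj_eq _ _ _ z g a x hz hN hNF (hper g Eg)).
  have E3 := E_lin hE (fun _ : 'I_1 => (coef z g a)^-1) (h := fun _ x => coef z g a * chi z a x)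
                 (fun _ => E2).
  by refine (E_ext E3 _) => x; rewrite big_ord1 mulKf.
exists #|S|, (fun i => chi z (enum_val i)); split.
  by move=> j; apply: chi_char.
move=> g; split => [Eg | [c hc]].
  exists (fun i => coef z g (enum_val i)) => x.
  rewrite (@fourier _ _ _ z g x hz hN hNF (hper g Eg)).
  rewrite -(big_enum_val (fun a => coef z g a * chi z a x)) /= [RHS]big_mkcond /=.
  apply: eq_bigr => a _; case: ifP => // haS.
  have [hc0 | hc] := eqVneq (coef z g a) 0; first by rewrite hc0 mul0r.
  by move: haS; rewrite inE; move/decbP: (key g a Eg hc) => ->.
have E4 := E_lin hE c (h := fun i => chi z (enum_val i)).
refine (E_ext (E4 _) _) => [i | x]; last by rewrite hc.
by have := enum_valP i; rewrite inE => /decbP.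
Qed.


Definition subgrp (s : nat) (L : 'rV[int]_s -> Prop) :=
  L 0 /\ (forall u v, L u -> L v -> L (u - v)).

Lemma subgrpN s (L : 'rV[int]_s -> Prop) : subgrp L -> forall u, L u -> L (- u).
Proof. by move=> [L0 LB] u hu; rewrite -sub0r; apply: LB. Qed.

Lemma subgrpD s (L : 'rV[int]_s -> Prop) : subgrp L -> forall u v, L u -> L v -> L (u + v).
Proof. by move=> hL u v hu hv; rewrite -[v]opprK; apply: hL.2 => //; apply: subgrpN. Qed.

Lemma subgrp_sum s (L : 'rV[int]_s -> Prop) (I : finType) (F : I -> 'rV[int]_s) :
  subgrp L -> (forall i, L (F i)) -> L (\sum_i F i).
Proof.
move=> hL hF; apply: (big_ind L) => //; first exact: hL.1.
exact: subgrpD.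
Qed.

Lemma subgrp_muln s (L : 'rV[int]_s -> Prop) u n :
  subgrp L -> L u -> L (u *+ n).
Proof.
move=> hL hu; elim: n => [|n IH]; first by rewrite mulr0n; exact: hL.1.
by rewrite mulrS; apply: subgrpD.
Qed.

Lemma index_mul s (L : 'rV[int]_s -> Prop) n :
  subgrp L -> has_index L n -> forall v, L (v *+ n).
Proof.
move=> hL [reps hreps] v; have [L0 LB] := hL.
have [sg hsg] : exists sg : 'I_n -> 'I_n, forall i, L (reps i + v - reps (sg i)).
  apply: (functional_choice (fun i j => L (reps i + v - reps j))) => i.
  by have [j [hj _]] := hreps (reps i + v); exists j.
have inj_sg : injective sg.
  move=> i j hij.
  have hd : L (reps i - reps j).
    have := LB _ _ (hsg i) (hsg j); rewrite hij.
    by congr L; rewrite opprB addrA subrK opprD addrA addrAC addrK.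
  have [k [_ hk]] := hreps (reps i).
  have h0 : L (reps i - reps i) by rewrite subrr.
  have e1 := hk i h0.
  by rewrite -e1; apply: hk.
have := subgrp_sum (F := fun i => reps i + v - reps (sg i)) hL hsg.
rewrite sumrB big_split /= sumr_const card_ord.
by rewrite -(reindex_inj inj_sg (F := reps) (P := xpredT)) /= addrAC subrr add0r.
Qed.


Definition liftz (s K : nat) (x : 'rV['I_K.+1]_s) : 'rV[int]_s :=
  \row_i ((x 0 i : nat)%:Z).

Lemma liftz0 s K : liftz (0 : 'rV['I_K.+1]_s) = 0.
Proof. by apply/matrixP => i j; rewrite !mxE. Qed.

Lemma liftzD s K (x y : 'rV['I_K.+1]_s) :
  liftz (x + y) = liftz x + liftz y -
     (\row_i (((x 0%R i : nat) + (y 0%R i : nat)) %/ K.+1)%N%:Z) *+ K.+1.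
Proof.
apply/matrixP => i j; rewrite !mxE mulmxnE !mxE /=.
have := divn_eq (x 0 j + y 0 j) K.+1; lia.
Qed.

Lemma helper1 s (v a b u w : 'rV[int]_s) : v = b + u -> v - (a + b - w) = (u + w) - a.
Proof. by move=> ->; apply/matrixP => i j; rewrite !mxE; ring. Qed.

Lemma helper2 s (v a c r w : 'rV[int]_s) : a = c + r - w -> c = (v - r) - (v - a) + w.
Proof. by move=> ->; apply/matrixP => i j; rewrite !mxE; ring. Qed.

Lemma lift_per s K (v : 'rV[int]_s) :
  v = liftz (\row_j (Ordinal (absz_modz_lt (v 0%R j) (ltn0Sn K))) : 'rV['I_K.+1]_s)
      + (\row_j (v 0%R j %/ K.+1%:Z)%Z) *+ K.+1.
Proof.
apply/matrixP => i j; rewrite !mxE mulmxnE !mxE /=.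
rewrite (ord1 i) abszE ger0_norm ?modz_ge0 // {1}(divz_eq (v 0 j) K.+1%:Z) addrC.
by rewrite -[in RHS]mulr_natr natz.
Qed.

Lemma index_of_mul s (L : 'rV[int]_s -> Prop) K :
  subgrp L -> (forall v, L (v *+ K.+1)) ->
  exists2 n, has_index L n & (n %| K.+1 ^ s)%N.
Proof.
move=> hL hmul; have [L0 LB] := hL.
pose Gt := 'rV['I_K.+1]_s.
pose H : {set Gt} := [set x | decb (L (liftz x))].
have gH : group_set H.
  apply/group_setP; split; first by rewrite inE; apply/decbP; rewrite liftz0.
  move=> x y; rewrite !inE => /decbP hx /decbP hy; apply/decbP.
  rewrite [(x * y)%g]/(x + y) liftzD; apply: LB => //.
  exact: subgrpD.
pose HG := Group gH.
pose P := rcosets HG [set: Gt].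
exists #|P|; last first.
  have := dvdn_indexg [set: Gt]%G HG.
  by rewrite cardsT card_mx card_ord mul1n.
exists (fun i => liftz (repr (enum_val i))) => v.
pose xv : Gt := \row_j (Ordinal (absz_modz_lt (v 0%R j) (ltn0Sn K))).
have hxv := lift_per K v.
pose C := (HG :* xv)%g.
have CP : C \in P by apply/rcosetsP; exists xv; rewrite ?inE.
have hr : L (v - liftz (repr C)).
  have rC : repr C \in C := mem_repr_rcoset HG xv.
  move: rC; rewrite mem_rcoset inE => /decbP hc.
  have e : liftz (repr C) = liftz ((repr C * xv^-1)%g + xv).
    by rewrite [(repr C * xv^-1)%g]/(repr C - xv) subrK.
  rewrite e liftzD (helper1 _ _ hxv); apply: LB => //.
  by apply: subgrpD.
exists (enum_rank_in CP C); split; first by rewrite enum_rankK_in.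
move=> j hj; apply: enum_val_inj; rewrite enum_rankK_in //.
have [y _ ey] : exists2 y, y \in [set: Gt] & enum_val j = (HG :* y)%g.
  by apply/rcosetsP; apply: enum_valP.
set rj := repr (enum_val j) in hj *; set r := repr C in hr *.
have e : liftz rj = liftz ((rj * r^-1)%g + r).
  by rewrite [(rj * r^-1)%g]/(rj - r) subrK.
rewrite liftzD in e.
have hc : L (liftz (rj * r^-1)%g).
  rewrite (helper2 v e); apply: subgrpD => //; exact: LB.
have : rj \in (HG :* r)%g by rewrite mem_rcoset inE; apply/decbP.
move/rcoset_eqP; rewrite /rj /r ey rcoset_repr rcoset_repr.
by [].
Qed.


Lemma period_subgrp (s : nat) (F : Type) (E : ('rV[int]_s -> F) -> Prop) :
  subgrp (period_lattice E).
Proof.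
split.
  by move=> f _; apply: functional_extensionality => x; rewrite /transl addr0.
move=> u v hu hv f Ef; apply: functional_extensionality => x; rewrite /transl.
have eu := equal_f (hu f Ef); have ev := equal_f (hv f Ef).
rewrite /transl in eu ev.
by rewrite -(ev (x + (u - v))) -addrA subrK eu.
Qed.

Lemma char_mulrn (s : nat) (F : fieldType) (th : 'rV[int]_s -> F) u n :
  is_character th -> th (u *+ n) = th u ^+ n.
Proof.
move=> [h0 hD]; elim: n => [|n IH]; first by rewrite mulr0n expr0 h0.
by rewrite mulrS hD IH exprS.
Qed.

Lemma char_neq0 (s : nat) (F : fieldType) (th : 'rV[int]_s -> F) u :
  is_character th -> th u != 0.
Proof.
move=> [h0 hD]; apply/negP => /eqP h.
have := hD u (- u); rewrite subrr h0 h mul0r => /eqP.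
by rewrite oner_eq0.
Qed.

Lemma CS_CL (s : nat) (F : fieldType) (E : ('rV[int]_s -> F) -> Prop) :
  characteristic_subspace E -> characteristic_sublattice F (period_lattice E).
Proof.
move=> [m [th [hch hsp]]]; exists m, th; split => // v; split.
  move=> hv j.
  have Ej : E (th j).
    apply/hsp; exists (fun i => (i == j)%:R) => x.
    rewrite (bigD1 j) //= eqxx mul1r big1 ?addr0 // => i /negPf ->.
    by rewrite mul0r.
  have := equal_f (hv _ Ej) 0; rewrite /transl add0r => ->.
  by case: (hch j).
move=> hv f /hsp [c hc]; apply: functional_extensionality => x.
rewrite /transl !hc; apply: eq_bigr => i _.
by have [_ hD] := hch i; rewrite hD hv mulr1.
Qed.

Lemma subgrp_scale s (L : 'rV[int]_s -> Prop) (a : int) u :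
  subgrp L -> L u -> L (a *: u).
Proof.
move=> hL hu; case: a => n.
  by rewrite -natz scaler_nat; apply: subgrp_muln.
rewrite NegzE scaleNr -natz scaler_nat; apply: subgrpN => //.
exact: subgrp_muln.
Qed.

Lemma pow_iter (F : fieldType) (x : F) p n t :
  x ^+ (p ^ n) = x -> x ^+ (p ^ (n * t)) = x.
Proof.
move=> h; elim: t => [|t IH]; first by rewrite muln0 expn0 expr1.
by rewrite mulnS expnD exprM h.
Qed.

Lemma CL_per (p : nat) (F : fieldType) (hp : prime p) (halg : algebraic_over_Fp F p)
  (s : nat) (E : ('rV[int]_s -> F) -> Prop) :
  characteristic_sublattice F (period_lattice E) ->
  exists N, [/\ (0 < N)%N, coprime N p & forall v, period_lattice E (v *+ N)].
Proof.
move=> [m [th [hch hL]]].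
have [nf hnf] : exists nf : 'I_m * 'I_s -> nat, forall jk,
    (0 < nf jk)%N /\ th jk.1 (delta_mx 0 jk.2) ^+ (p ^ nf jk) = th jk.1 (delta_mx 0 jk.2).
  apply: (functional_choice (fun jk n => (0 < n)%N /\
     th jk.1 (delta_mx 0 jk.2) ^+ (p ^ n) = th jk.1 (delta_mx 0 jk.2))) => jk.
  by have [n hn1 hn2] := halg (th jk.1 (delta_mx 0 jk.2)); exists n.
pose M := (\prod_(jk : 'I_m * 'I_s) nf jk)%N.
have M0 : (0 < M)%N by apply: prodn_gt0 => jk; case: (hnf jk).
have hM : forall jk, th jk.1 (delta_mx 0 jk.2) ^+ (p ^ M - 1) = 1.
  move=> jk; have [_ h] := hnf jk.
  have [t ->] : exists t, M = (nf jk * t)%N.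
    by exists (\prod_(jk' | jk' != jk) nf jk')%N; rewrite /M (bigD1 jk).
  have := pow_iter t h; set x := th _ _ => hx.
  have x0 : x != 0 by apply: char_neq0.
  apply: (mulIf x0); rewrite mul1r -exprSr subn1 prednK ?expn_gt0 ?prime_gt0 // ?hx //.
have pM1 : (1 < p ^ M)%N by rewrite -{1}(expn0 p) ltn_exp2l ?prime_gt1.
exists (p ^ M - 1)%N; split.
- by rewrite subn_gt0.
- rewrite coprime_sym prime_coprime //; apply/negP => hd.
  have hpM : (p %| p ^ M)%N by rewrite -(prednK M0) expnS dvdn_mulr.
  have := dvdn_sub hpM hd; rewrite (subKn (ltnW pM1)) dvdn1 => /eqP hp1.
  by rewrite hp1 in hp.
move=> v.
have hsub := period_subgrp E.
rewrite [v]row_sum_delta -sumrMnl; apply: subgrp_sum => // k.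
rewrite scalerMnr; apply: (subgrp_scale _ hsub).
apply/hL => j; rewrite char_mulrn //.
exact: (hM (j, k)).
Qed.

Theorem proposition5p11 (p : nat) (F : closedFieldType)
  (hp : prime p) (hchar : p \in [pchar F]) (halg : algebraic_over_Fp F p)
  (s : nat) (E : ('rV[int]_s -> F) -> Prop)
  (hE : fin_dim_subspace E) (hinv : transl_invariant E) :
  (characteristic_subspace E <-> characteristic_sublattice F (period_lattice E)) /\
  (characteristic_subspace E <->
     exists2 n : nat, has_index (period_lattice E) n & coprime n p).
Proof.
have hsub := period_subgrp E.
have h1 := @CS_CL s F E.
have h2 : characteristic_sublattice F (period_lattice E) ->
    exists2 n : nat, has_index (period_lattice E) n & coprime n p.
  move/(CL_per hp halg) => [N [N0 cop hper]].
  have [K eK] : exists K, N = K.+1 by exists N.-1; rewrite prednK.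
  subst N; have [n hn hdv] := index_of_mul hsub hper.
  exists n => //.
  exact: coprime_dvdl hdv (coprimeXl s cop).
have h3 : (exists2 n : nat, has_index (period_lattice E) n & coprime n p) ->
    characteristic_subspace E.
  move=> [n hidx hcop].
  have hn := index_mul hsub hidx.
  have n0 : (0 < n)%N.
    by case: hidx => reps /(_ 0) [[i hi] _]; apply: leq_ltn_trans hi.
  pose N := (n * p.+1)%N.
  have N0 : (0 < N)%N by rewrite muln_gt0 n0.
  have copN : coprime N p by rewrite coprimeMl hcop coprimeSn.
  have NF : N%:R != 0 :> F.
    by rewrite -(GRing.dvdn_pcharf hchar) -prime_coprime // coprime_sym.
  have [z hz] := prim_root_exists_closed N0 NF.
  apply: (charsub_of_periodic hz N0 NF hE hinv) => f Ef x w.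
  have hw : period_lattice E (w *+ N).
    by rewrite /N mulrnA; apply: (subgrp_muln _ hsub); apply: hn.
  exact: (equal_f (hw f Ef) x).
split; split => [hc|hc].
- exact: h1.
- exact: h3 (h2 hc).
- exact: h2 (h1 hc).
- exact: h3.
Qed.
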